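(* Let $\theta=(\gamma,\mu,\sigma)\in\mathbb{R}\times\mathbb{R}\times(0,\infty)$ and $x\in\mathbb{R}$ with $1+\gamma z>0$, where $z=(x-\mu)/\sigma$, and let $u=u_\gamma(z)$. Then \[|\partial_\sigma\ell_\theta(x)|\le\begin{cases}\dfrac{z+1}{\sigma(1+\gamma z)}&\text{if }z\ge0,\\[1ex] \sigma^{-1}\big(1+u\log u\big)\,u^{\max(\gamma,0)}&\text{if }z\le0.\end{cases}\]
   Context: $u_\gamma(z)=(1+\gamma z)^{-1/\gamma}$ for $\gamma\ne0$ and $e^{-z}$ for $\gamma=0$. $\ell_\theta(x)=\log p_\theta(x)=-\log\sigma-u+(\gamma+1)\log u$ is the GEV log-density on $\{1+\gamma z>0\}$ (GEV density $p_\theta(x)=\sigma^{-1}e^{-u}u^{\gamma+1}\mathbf 1(1+\gamma z>0)$); its partial derivative in $\sigma$ is $\partial_\sigma\ell_\theta(x)=\frac{(1-u)z-1}{\sigma(1+\gamma z)}$. *)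

(* Defs.v *)
From Stdlib Require Import Reals.
Open Scope R_scope.

(* u_gamma(z) = (1 + gamma z)^(-1/gamma) for gamma <> 0, exp(-z) for gamma = 0.
   Only used on {1 + gamma z > 0}, where the real power is the usual one. *)
Definition u_gamma (gamma z : R) : R :=
  if Req_EM_T gamma 0 then exp (- z)
  else Rpower (1 + gamma * z) (- / gamma).

Definition zstd (mu sigma x : R) : R := (x - mu) / sigma.

(* Partial derivative in sigma of the GEV log-density, as given in the context:
   d_sigma l_theta(x) = ((1 - u) z - 1) / (sigma (1 + gamma z)). *)
Definition dsigma_ell (gamma mu sigma x : R) : R :=
  let z := zstd mu sigma x in
  let u := u_gamma gamma z in
  ((1 - u) * z - 1) / (sigma * (1 + gamma * z)).

(* Main.v *)
Require Import Defs.
From Stdlib Require Import Reals Lra Psatz.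
Open Scope R_scope.

Lemma exp_mul_opp (a : R) : exp a * exp (- a) = 1.
Proof. rewrite <- exp_plus. replace (a + - a) with 0 by ring. apply exp_0. Qed.

(* core: N = (1-u)z - 1, with u = exp t, w = exp(-g t) *)
Lemma core (g t z s : R) :
  0 < s ->
  ((g <> 0 /\ g * z = exp (- (g * t)) - 1) \/ (g = 0 /\ z = - t)) ->
  (0 <= z -> Rabs (((1 - exp t) * z - 1) / (s * exp (- (g * t))))
             <= (z + 1) / (s * exp (- (g * t)))) /\
  (z <= 0 -> Rabs (((1 - exp t) * z - 1) / (s * exp (- (g * t))))
             <= / s * (1 + exp t * t) * exp (Rmax g 0 * t)).
Proof.
  intros Hs H.
  pose proof (exp_mul_opp (g * t)) as HEF.
  pose proof (exp_ineq1_le (g * t)) as HE.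
  pose proof (exp_ineq1_le (- (g * t))) as HF.
  pose proof (exp_ineq1_le t) as Hu.
  pose proof (exp_pos (g * t)) as HEp.
  pose proof (exp_pos (- (g * t))) as HFp.
  pose proof (exp_pos t) as Hup.
  assert (Hinv : / (s * exp (- (g * t))) = / s * exp (g * t)).
  { rewrite Rinv_mult. f_equal. apply Rmult_eq_reg_l with (exp (- (g*t))); [|lra].
    rewrite Rinv_r by lra. lra. }
  assert (Hu1 : t <= 0 -> exp t <= 1).
  { intro; rewrite <- exp_0; destruct (Req_dec t 0) as [->|]; [lra|].
    left; apply exp_increasing; lra. }
  assert (Hu2 : 0 <= t -> 1 <= exp t).
  { intro; rewrite <- exp_0; destruct (Req_dec t 0) as [->|]; [lra|].
    left; apply exp_increasing; lra. }
  split.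
  - intro Hz.
    assert (Ht : t <= 0).
    { destruct H as [[Hg Hgz]|[Hg Hzt]]; [|lra].
      destruct (Rle_dec t 0) as [|Ht]; [auto|exfalso].
      destruct (Rlt_dec 0 g) as [Hg'|Hg'].
      + assert (g * t > 0) by nra. assert (exp (- (g*t)) < 1) by nra.
        assert (g * z >= 0) by nra. lra.
      + assert (g < 0) by lra. assert (g * t < 0) by nra.
        assert (exp (- (g*t)) > 1) by nra. assert (g * z <= 0) by nra. lra. }
    specialize (Hu1 Ht).
    unfold Rdiv. rewrite Hinv. apply Rabs_le.
    assert (0 < / s) by (apply Rinv_0_lt_compat; lra).
    assert (Hc : 0 < / s * exp (g * t)) by nra.
    assert (HN1 : (1 - exp t) * z - 1 <= z + 1) by nra.
    assert (HN2 : - (z + 1) <= (1 - exp t) * z - 1) by nra.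
    split; nra.
  - intro Hz.
    assert (Ht : 0 <= t).
    { destruct H as [[Hg Hgz]|[Hg Hzt]]; [|lra].
      destruct (Rle_dec 0 t) as [|Ht]; [auto|exfalso].
      destruct (Rlt_dec 0 g) as [Hg'|Hg'].
      + assert (g * t < 0) by nra. assert (exp (- (g*t)) > 1) by nra.
        assert (g * z <= 0) by nra. lra.
      + assert (g < 0) by lra. assert (g * t > 0) by nra.
        assert (exp (- (g*t)) < 1) by nra. assert (g * z >= 0) by nra. lra. }
    specialize (Hu2 Ht).
    assert (Hsi : 0 < / s) by (apply Rinv_0_lt_compat; lra).
    unfold Rdiv. rewrite Hinv.
    replace (((1 - exp t) * z - 1) * (/ s * exp (g * t)))
      with (/ s * (((1 - exp t) * z - 1) * exp (g * t))) by ring.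
    rewrite Rabs_mult, (Rabs_right (/ s)) by lra.
    rewrite Rmult_assoc. apply Rmult_le_compat_l; [lra|].
    apply Rabs_le.
    destruct H as [[Hg Hgz]|[Hg Hzt]].
    + destruct (Rlt_dec 0 g) as [Hg'|Hg'].
      * rewrite Rmax_left by lra.
        assert (g * (- z) <= g * t) by lra.
        assert (Hst : - z <= t) by nra.
        assert (HN1 : (1 - exp t) * z - 1 <= 1 + exp t * t) by nra.
        assert (HN2 : - (1 + exp t * t) <= (1 - exp t) * z - 1) by nra.
        split; nra.
      * assert (g < 0) by lra. rewrite Rmax_right by lra.
        replace (0 * t) with 0 by ring. rewrite exp_0.
        assert (HE1 : exp (g * t) <= 1).
        { rewrite <- exp_0. destruct (Req_dec t 0) as [->|].
          replace (g*0) with 0 by ring; lra. left; apply exp_increasing; nra. }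
        assert (HF2 : exp (- (g*t)) - 1 <= - (g * t) * exp (- (g*t))) by nra.
        assert (Hst : - z <= t * exp (- (g * t))) by nra.
        assert (HN1 : ((1 - exp t) * z - 1) * exp (g * t) <= exp t * t).
        { assert (((1 - exp t) * z) <= (exp t - 1) * (t * exp (- (g * t)))) by nra.
          assert ((exp t - 1) * (t * exp (- (g * t))) * exp (g*t) = (exp t - 1) * t).
          { replace ((exp t - 1) * (t * exp (- (g * t))) * exp (g*t)) with ((exp t - 1) * t * (exp (g*t) * exp (- (g*t)))) by ring.
            rewrite HEF; ring. }
          assert ((1 - exp t) * z * exp (g*t) <= (exp t - 1) * (t * exp (- (g * t))) * exp (g*t)).
          { apply Rmult_le_compat_r; lra. }
          replace (((1 - exp t) * z - 1) * exp (g * t)) with ((1 - exp t) * z * exp (g*t) - exp (g*t)) by ring.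
          set (A := (1 - exp t) * z * exp (g*t)) in *.
          set (B := (exp t - 1) * (t * exp (- (g * t))) * exp (g*t)) in *.
          assert (exp t * t = (exp t - 1) * t + t) by ring.
          lra. }
        assert (HN2 : - 1 <= ((1 - exp t) * z - 1) * exp (g * t)).
        { assert (0 <= (1 - exp t) * z) by nra.
          assert ((1 - exp t) * z * exp (g*t) >= 0) by nra.
          replace (((1 - exp t) * z - 1) * exp (g * t)) with ((1 - exp t) * z * exp (g*t) - exp (g*t)) by ring.
          lra. }
        split; nra.
    + subst g. rewrite Rmax_right by lra.
      replace (0 * t) with 0 in * by ring. rewrite exp_0 in *.
      split; nra.
Qed.

Theorem lemmaB3 (gamma mu sigma x : R) :
  0 < sigma ->
  0 < 1 + gamma * zstd mu sigma x ->
  let z := zstd mu sigma x in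
  let u := u_gamma gamma z in
  (0 <= z -> Rabs (dsigma_ell gamma mu sigma x) <= (z + 1) / (sigma * (1 + gamma * z))) /\
  (z <= 0 -> Rabs (dsigma_ell gamma mu sigma x)
             <= / sigma * (1 + u * ln u) * Rpower u (Rmax gamma 0)).
Proof.
  intros Hs Hw z u.
  unfold dsigma_ell. fold z. fold u.
  set (t := ln u).
  assert (Hut : u = exp t /\ 1 + gamma * z = exp (- (gamma * t)) /\
     ((gamma <> 0 /\ gamma * z = exp (- (gamma * t)) - 1) \/ (gamma = 0 /\ z = - t))).
  { unfold t, u, u_gamma. destruct (Req_EM_T gamma 0) as [Hg|Hg].
    - subst gamma. rewrite ln_exp.
      split; [reflexivity|]. split.
      + replace (- (0 * - z)) with 0 by ring. rewrite exp_0; ring.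
      + right; split; [reflexivity|ring].
    - unfold Rpower. rewrite ln_exp.
      assert (Hl : - (gamma * (- / gamma * ln (1 + gamma * z))) = ln (1 + gamma * z)).
      { field. auto. }
      rewrite Hl, exp_ln by exact Hw.
      repeat split; auto. left; split; [auto|ring]. }
  destruct Hut as [Hu [Hw' Hrel]].
  assert (Hrp : Rpower u (Rmax gamma 0) = exp (Rmax gamma 0 * t)).
  { unfold Rpower, t. reflexivity. }
  rewrite Hrp. rewrite Hw'. rewrite Hu at 1 3.
  replace (exp t * t) with (u * t) by (rewrite Hu; reflexivity).
  rewrite Hu.
  apply core; auto.
Qed.
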